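(* Let $\widehat{V}_2(\mathbf{A};\mathbf{Y}) = \frac{\hat\sigma^2}{n}\Big[1+\frac1n\sum_{i=1}^n\sum_{j=1}^n\mathbf{A}_{ij}\Big]$. Under the asymptotic scaling assumption and the homoskedasticity assumption $\mathrm{var}(X_i)=\mathrm{var}(X_j)$ for all $i,j\in\mathcal{V}$, for every $\epsilon>0$, \[\lim_{n\to\infty}\Pr\big(n\,\mathrm{var}(\overline{X}) - n\widehat{V}_2(\mathbf{A}^\circ;\mathbf{Y})>\epsilon\big)=0.\]
   Context: Setting: $\mathcal{G}=(\mathcal{V},\mathcal{E})$ is a simple undirected graph with a real random variable $X_i$ attached to each vertex $i$. $\mathcal{G}$ is a dependency graph: for all disjoint $\mathcal{V}_1,\mathcal{V}_2\subset\mathcal{V}$ such that no edge of $\mathcal{E}$ joins a vertex of $\mathcal{V}_1$ to a vertex of $\mathcal{V}_2$, $\{X_i:i\in\mathcal{V}_1\}$ is independent of $\{X_j:j\in\mathcal{V}_2\}$. A subset $\mathcal{V}_S\subseteq\mathcal{V}$ with $|\mathcal{V}_S|=n$ is observed, labeled $1,\dots,n$. $\mathcal{G}_S=(\mathcal{V}_S,\mathcal{E}_S)$ is the induced subgraph on $\mathcal{V}_S$, with $n\times n$ adjacency matrix $\mathbf{A}^\circ$ (0-1, symmetric, zero diagonal). $\mathcal{G}_R=(\mathcal{V}_S,\mathcal{E}_R)$ is a subgraph with $\mathcal{E}_R\subseteq\mathcal{E}_S$; $d_i$ is the degree of $i\in\mathcal{V}_S$ in $\mathcal{G}$; $\mathbf{Y}=((X_1,\dots,X_n),(d_1,\dots,d_n),\mathcal{G}_R)$.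 Let $\mu=\frac1n\sum_{i=1}^n \mathrm{E}[X_i]$, $\overline{X}=\frac1n\sum_i X_i$, $\hat\sigma^2=\frac1n\sum_i(X_i-\overline{X})^2$. Asymptotic scaling assumption: a sequence, indexed by $n\to\infty$, of such settings (nested graphs with $|\mathcal{V}|=N_n\ge n$, $|\mathcal{V}_S|=n$), with finite positive constants $c_1,c_2,c_3$ independent of $n$ such that: $\Pr(|X_i-\mu|>c_1)=0$ for all $i\in\mathcal{V}_S$; $\sum_{j}\mathbf{A}^\circ_{ij}\le c_2$ for all $i\in\mathcal{V}_S$; and $\lim_{n\to\infty} n\,\mathrm{var}(\overline{X})=c_3$. *)

(* Defs.v *)
From HB Require Import structures.
From mathcomp Require Import all_boot all_order all_algebra.
From mathcomp Require Import all_classical all_reals all_analysis.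
Set Implicit Arguments. Unset Strict Implicit. Unset Printing Implicit Defensive.
Import Order.TTheory GRing.Theory Num.Theory.
Import numFieldNormedType.Exports.
Local Open Scope classical_set_scope.
Local Open Scope ring_scope.

(* The n observed vertices V_S are labelled 1..n (here
   0..n-1) through an injective labelling lab : 'I_n -> nat. *)

Definition gen_sigma d (T : measurableType d) (R : realType)
  (X : nat -> T -> R) (V : set nat) : set (set T) :=
  <<s [set A | exists i (C : set R), [/\ V i, measurable C & A = X i @^-1` C]] >>.

Definition indep_fam d (T : measurableType d) (R : realType)
  (P : probability T R) (X : nat -> T -> R) (V1 V2 : set nat) : Prop :=
  forall A B, gen_sigma X V1 A -> gen_sigma X V2 B ->
    P (A `&` B) = (P A * P B)%E.

Definition simple_graph (V : set nat) (E : rel nat) : Prop :=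
  [/\ forall i j, E i j -> E j i, forall i, ~~ E i i &
      forall i j, E i j -> V i /\ V j].

Definition dependency_graph d (T : measurableType d) (R : realType)
  (P : probability T R) (X : nat -> T -> R) (V : set nat) (E : rel nat) : Prop :=
  forall V1 V2 : set nat, V1 `<=` V -> V2 `<=` V -> V1 `&` V2 = set0 ->
    (forall i j, V1 i -> V2 j -> ~~ E i j) -> indep_fam P X V1 V2.

Definition adjmx (R : realType) (n : nat) (E : rel nat) (lab : 'I_n -> nat)
  : 'M[R]_n := \matrix_(i, j) (E (lab i) (lab j))%:R.

Definition mean_mu d (T : measurableType d) (R : realType) (P : probability T R)
  (n : nat) (X : nat -> T -> R) (lab : 'I_n -> nat) : R :=
  n%:R^-1 * \sum_(i < n) fine ('E_P[X (lab i)]).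

Definition Xbar d (T : measurableType d) (R : realType)
  (n : nat) (X : nat -> T -> R) (lab : 'I_n -> nat) : T -> R :=
  fun w => n%:R^-1 * \sum_(i < n) X (lab i) w.
Arguments Xbar {d T R} n X lab.

Definition sigma2_hat d (T : measurableType d) (R : realType)
  (n : nat) (X : nat -> T -> R) (lab : 'I_n -> nat) : T -> R :=
  fun w => n%:R^-1 * \sum_(i < n) (X (lab i) w - Xbar n X lab w) ^+ 2.
Arguments sigma2_hat {d T R} n X lab.

Definition V2_hat d (T : measurableType d) (R : realType)
  (n : nat) (X : nat -> T -> R) (lab : 'I_n -> nat) (A : 'M[R]_n) : T -> R :=
  fun w => sigma2_hat n X lab w / n%:R *
           (1 + n%:R^-1 * \sum_(i < n) \sum_(j < n) A i j).
Arguments V2_hat {d T R} n X lab A.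
Arguments adjmx R n E lab.
Arguments mean_mu {d T R} P n X lab.

(* Main.v *)
Set Warnings "-notation-overridden,-ambiguous-paths,-deprecated,-notation-incompatible-prefix".
From HB Require Import structures.
From mathcomp Require Import all_boot all_order all_algebra.
From mathcomp Require Import all_classical all_reals all_analysis.
From mathcomp Require Import measurable_realfun.
Import Order.TTheory GRing.Theory Num.Theory.
Import numFieldNormedType.Exports.
Local Open Scope classical_set_scope.
Local Open Scope ring_scope.
From mathcomp Require Import zify ring lra.
Require Import Defs.
Set Implicit Arguments. Unset Strict Implicit.
Section Tool.
Context d (T : measurableType d) (R : realType) (P : probability T R).

Definition bmf (f : T -> R) :=
  measurable_fun setT f /\ exists M : R, forall x, `|f x| <= M.

Definition Ef (f : T -> R) : R := fine ('E_P[f])%E.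

Lemma bmf_Lfun1 f : bmf f -> f \in Lfun P 1.
Proof.
move=> [mf [M hM]]; apply/Lfun1_integrable.
apply: measurable_bounded_integrable => //.
  by apply: (le_lt_trans (probability_le1 P measurableT)); exact: ltry.
exists M; split; first exact: num_real.
move=> y My x _; apply: le_trans (hM x) _; exact: ltW.
Qed.

Lemma bmfE f : bmf f -> ('E_P[f] = (Ef f)%:E)%E.
Proof. by move=> bf; rewrite fineK// expectation_fin_num// bmf_Lfun1. Qed.

Lemma bmf_cst c : bmf (cst c).
Proof. by split => //; exists `|c|. Qed.

Lemma bmfD f g : bmf f -> bmf g -> bmf (fun x => f x + g x).
Proof.
move=> [mf [M hM]] [mg [N hN]]; split; first exact: measurable_funD.
exists (M + N) => x; apply: le_trans (ler_normD _ _) _; exact: lerD.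
Qed.

Lemma bmfM f g : bmf f -> bmf g -> bmf (fun x => f x * g x).
Proof.
move=> [mf [M hM]] [mg [N hN]]; split; first exact: measurable_funM.
exists (M * N) => x; rewrite normrM; apply: ler_pM => //.
Qed.

Lemma bmfZ k f : bmf f -> bmf (fun x => k * f x).
Proof. by move=> bf; have := bmfM (bmf_cst k) bf. Qed.

Lemma bmfN f : bmf f -> bmf (fun x => - f x).
Proof.
move=> bf; have := bmfZ (-1) bf.
by congr bmf; apply/funext => x; rewrite mulN1r.
Qed.

Lemma bmfB f g : bmf f -> bmf g -> bmf (fun x => f x - g x).
Proof. move=> bf bg; exact: (bmfD bf (bmfN bg)). Qed.

Lemma bmf_sum (I : Type) (s : seq I) (F : I -> T -> R) :
  (forall i, bmf (F i)) -> bmf (fun x => \sum_(i <- s) F i x).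
Proof.
move=> bF; elim: s => [|i s IH].
  by under eq_fun do rewrite big_nil; exact: bmf_cst.
by under eq_fun do rewrite big_cons; exact: bmfD.
Qed.

Lemma EfD f g : bmf f -> bmf g -> Ef (fun x => f x + g x) = Ef f + Ef g.
Proof.
move=> bf bg; rewrite /Ef.
have := expectationD (bmf_Lfun1 bf) (bmf_Lfun1 bg).
move=> ->; rewrite (bmfE bf) (bmfE bg) //.
Qed.

Lemma EfZ k f : bmf f -> Ef (fun x => k * f x) = k * Ef f.
Proof.
move=> bf; rewrite /Ef.
have -> : (fun x => k * f x) = (k \o* f)%R by apply/funext => x /=; rewrite mulrC.
have := expectationZl k (bmf_Lfun1 bf).
move=> ->; rewrite (bmfE bf) //.
Qed.

Lemma Ef_cst c : Ef (cst c) = c.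
Proof. by rewrite /Ef expectation_cst. Qed.

Lemma EfN f : bmf f -> Ef (fun x => - f x) = - Ef f.
Proof.
move=> bf; have := EfZ (-1) bf; rewrite mulN1r.
by under eq_fun do rewrite mulN1r.
Qed.

Lemma EfB f g : bmf f -> bmf g -> Ef (fun x => f x - g x) = Ef f - Ef g.
Proof. by move=> bf bg; rewrite (EfD bf (bmfN bg)) EfN. Qed.

Lemma Ef_sum (I : Type) (s : seq I) (F : I -> T -> R) :
  (forall i, bmf (F i)) -> Ef (fun x => \sum_(i <- s) F i x) = \sum_(i <- s) Ef (F i).
Proof.
move=> bF; elim: s => [|i s IH].
  by under eq_fun do rewrite big_nil; rewrite big_nil Ef_cst.
under eq_fun do rewrite big_cons.
by rewrite EfD ?big_cons ?IH //; exact: bmf_sum.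
Qed.

Lemma Ef_ge0 f : bmf f -> (forall x, 0 <= f x) -> 0 <= Ef f.
Proof.
move=> bf f0; rewrite /Ef fine_ge0 //; exact: expectation_ge0.
Qed.

Lemma Ef_le f g : bmf f -> bmf g -> (forall x, f x <= g x) -> Ef f <= Ef g.
Proof.
move=> bf bg fg; rewrite -subr_ge0 -EfB //.
by apply: Ef_ge0 => [|x]; [exact: bmfB | rewrite subr_ge0].
Qed.

Lemma Ef_abs_le f B : bmf f -> (forall x, `|f x| <= B) -> `|Ef f| <= B.
Proof.
move=> bf fB; rewrite ler_norml; apply/andP; split.
  rewrite -(Ef_cst (- B)); apply: Ef_le => // [|x]; first exact: bmf_cst.
  by have := fB x; rewrite ler_norml => /andP[].
rewrite -(Ef_cst B); apply: Ef_le => // [|x]; first exact: bmf_cst.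
by have := fB x; rewrite ler_norml => /andP[].
Qed.

Lemma bmf_indic (A : set T) : measurable A -> bmf (\1_A).
Proof.
move=> mA; split; first exact: measurable_indic.
by exists 1 => x; rewrite /indic; case: (x \in A); rewrite ?normr1 ?normr0.
Qed.

Lemma Ef_indic (A : set T) : measurable A -> Ef (\1_A) = fine (P A).
Proof. by move=> mA; rewrite /Ef expectation_indic. Qed.

End Tool.
Section A.
Context (R : realType).
Lemma mlvl (N : nat) (m : int) : measurable [set y : R | m%:~R <= y * N%:R < (m+1)%:~R].
Proof.
have mf : measurable_fun setT (fun y : R => y * N%:R).
  by apply: measurable_funM => //.
have := mf measurableT _ (measurable_itv `[m%:~R, (m+1)%:~R[).
rewrite setTI; congr measurable; apply/seteqP; split => y /=; rewrite in_itv //.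
Qed.
End A.
Section B.
Context (R : realType).
Definition stp (L : nat) : seq int := [seq (i%:Z - L%:Z)%R | i <- iota 0 (2*L)].
Lemma stp_uniq L : uniq (stp L).
Proof. rewrite map_inj_uniq ?iota_uniq //. move=> i j /= h. by have [] := addIr _ h. Qed.
Lemma mem_stp L (m : int) : -(L%:Z) <= m -> m < L%:Z -> m \in stp L.
Proof.
move=> h1 h2; apply/mapP; exists (absz (m + L%:Z)%R); last by lia.
by rewrite mem_iota; lia.
Qed.
Definition lvl (N : nat) (m : int) : set R := [set y : R | m%:~R <= y * N%:R < (m+1)%:~R].
Definition qf (T : Type) (U : T -> R) (N L : nat) (x : T) : R :=
  \sum_(m <- stp L) (m%:~R / N%:R) * \1_(U @^-1` lvl N m) x.
Lemma qfE (T : Type) (U : T -> R) N L x : `|U x * N%:R| < L%:R ->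
  qf U N L x = (Num.floor (U x * N%:R))%:~R / N%:R.
Proof.
move=> hL; rewrite /qf.
set m0 := Num.floor (U x * N%:R).
have hm0 : m0 \in stp L.
  apply: mem_stp.
  - rewrite floor_ge_int; move: hL; rewrite ltr_norml => /andP[h _].
    by rewrite intrN ltW.
  - by rewrite floor_lt_int; move: hL; rewrite ltr_norml => /andP[_ h].
rewrite (bigD1_seq m0 hm0 (stp_uniq L)) /= big1 ?addr0.
  rewrite indicE mem_set ?mulr1 //= /lvl /=; exact: floor_itv.
move=> m hm; rewrite indicE memNset ?mulr0 //= /lvl /=.
by rewrite -floor_eq eq_sym; apply/negP.
Qed.
End B.
Section C.
Context (R : realType).
Lemma qf_err (T : Type) (U : T -> R) N L x : (0 < N)%N -> `|U x * N%:R| < L%:R ->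
  `|U x - qf U N L x| <= N%:R^-1.
Proof.
move=> N0 hL; rewrite qfE //.
have /andP[h1 h2] := floor_itv (U x * N%:R).
have Np : 0 < N%:R :> R by rewrite ltr0n.
have -> : U x - (Num.floor (U x * N%:R))%:~R / N%:R
   = (U x * N%:R - (Num.floor (U x * N%:R))%:~R) / N%:R.
  by rewrite mulrBl mulfK // gt_eqF.
rewrite normrM normfV (gtr0_norm Np) -[X in _ <= X]mul1r ler_pM2r ?invr_gt0 //.
rewrite ger0_norm ?subr_ge0 //.
by move: h2; rewrite intrD; lra.
Qed.

Lemma prod_diff (a a' b b' e M : R) : `|a - a'| <= e -> `|b - b'| <= e ->
  `|b| <= M -> `|a'| <= M + 1 -> `|a * b - a' * b'| <= e * M + (M + 1) * e.
Proof.
move=> ha hb hbM ha'.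
have -> : a * b - a' * b' = (a - a') * b + a' * (b - b') by ring.
apply: le_trans (ler_normD _ _) _; rewrite !normrM.
apply: lerD; apply: ler_pM => //.
Qed.

Lemma zero_of_small (x C : R) : (forall N : nat, (0 < N)%N -> `|x| <= C / N%:R) -> x = 0.
Proof.
move=> h; apply/eqP; apply: contraT => x0.
have xp : 0 < `|x| by rewrite normr_gt0.
set N := (Num.truncn (C / `|x|)).+1.
have := h N isT; have := truncnS_gt (C / `|x|); rewrite -/N => h1 h2.
have Np : 0 < N%:R :> R by rewrite ltr0n.
move: h1; rewrite ltr_pdivrMr // => h1.
move: h2; rewrite ler_pdivlMr // => h2.
by move: (le_lt_trans h2 h1); rewrite mulrC ltxx.
Qed.
End C.
Section Indep.
Context d (T : measurableType d) (R : realType) (P : probability T R).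
Variables (Xa Xb : T -> R).
Hypothesis mXa : measurable_fun setT Xa.
Hypothesis mXb : measurable_fun setT Xb.
Hypothesis HI : forall C D : set R, measurable C -> measurable D ->
  P (Xa @^-1` C `&` Xb @^-1` D) = (P (Xa @^-1` C) * P (Xb @^-1` D))%E.

Lemma mpre (X : T -> R) (g : R -> R) N m : measurable_fun setT X -> measurable_fun setT g ->
  measurable ((g \o X) @^-1` lvl N m).
Proof.
move=> mX mg; have := (measurableT_comp mg mX) measurableT _ (mlvl N m).
by rewrite setTI.
Qed.

Lemma mpreR (g : R -> R) N m : measurable_fun setT g -> measurable (g @^-1` lvl N m).
Proof. by move=> mg; have := mg measurableT _ (mlvl N m); rewrite setTI. Qed.

Lemma bmf_qf (X : T -> R) (g : R -> R) N L : measurable_fun setT X -> measurable_fun setT g ->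
  bmf (qf (g \o X) N L).
Proof.
move=> mX mg; rewrite /qf; apply: bmf_sum => m.
by apply: bmfZ; apply: bmf_indic; exact: mpre.
Qed.

Lemma Ef_qf (X : T -> R) (g : R -> R) N L : measurable_fun setT X -> measurable_fun setT g ->
  Ef P (qf (g \o X) N L) =
  \sum_(m <- stp L) (m%:~R / N%:R) * fine (P ((g \o X) @^-1` lvl N m)).
Proof.
move=> mX mg; rewrite /qf Ef_sum; last first.
  by move=> m; apply: bmfZ; apply: bmf_indic; exact: mpre.
apply: eq_bigr => m _; rewrite EfZ ?Ef_indic //; first exact: mpre.
by apply: bmf_indic; exact: mpre.
Qed.

Lemma indep_step (g k : R -> R) N L : measurable_fun setT g -> measurable_fun setT k ->
  Ef P (fun x => qf (g \o Xa) N L x * qf (k \o Xb) N L x) =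
  Ef P (qf (g \o Xa) N L) * Ef P (qf (k \o Xb) N L).
Proof.
move=> mg mk.
rewrite (Ef_qf N L mXa mg) (Ef_qf N L mXb mk).
have -> : (fun x => qf (g \o Xa) N L x * qf (k \o Xb) N L x) =
  (fun x => \sum_(m <- stp L) \sum_(l <- stp L) ((m%:~R / N%:R) * (l%:~R / N%:R)) *
      \1_((g \o Xa) @^-1` lvl N m `&` (k \o Xb) @^-1` lvl N l) x).
  apply/funext => x; rewrite /qf big_distrl; apply: eq_bigr => m _.
  rewrite big_distrr; apply: eq_bigr => l _ /=.
  by rewrite indicI /= mulrACA.
rewrite Ef_sum; last first.
  move=> m; apply: bmf_sum => l; apply: bmfZ; apply: bmf_indic.
  by apply: measurableI; exact: mpre.
rewrite big_distrl; apply: eq_bigr => m _.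
rewrite Ef_sum; last first.
  move=> l; apply: bmfZ; apply: bmf_indic.
  by apply: measurableI; exact: mpre.
rewrite big_distrr; apply: eq_bigr => l _ /=.
rewrite EfZ; last by apply: bmf_indic; apply: measurableI; exact: mpre.
rewrite Ef_indic; last by apply: measurableI; exact: mpre.
rewrite (HI (mpreR N m mg) (mpreR N l mk)).
rewrite fineM ?fin_num_measure //; first by rewrite mulrACA.
- exact: (mpre N m mXa mg).
- exact: (mpre N l mXb mk).
Qed.

Lemma bmf_comp (X : T -> R) (g : R -> R) M : measurable_fun setT X -> measurable_fun setT g ->
  (forall y, `|g y| <= M) -> bmf (g \o X).
Proof. move=> mX mg gM; split; [exact: measurableT_comp | by exists M => x; exact: gM]. Qed.

Lemma indep_Ef (g k : R -> R) (M : R) : measurable_fun setT g -> measurable_fun setT k ->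
  (forall y, `|g y| <= M) -> (forall y, `|k y| <= M) ->
  Ef P (fun x => g (Xa x) * k (Xb x)) = Ef P (g \o Xa) * Ef P (k \o Xb).
Proof.
move=> mg mk gM kM.
have M0 : 0 <= M := le_trans (normr_ge0 _) (gM 0).
apply/eqP; rewrite -subr_eq0; apply/eqP.
apply: (@zero_of_small _ _ (2 * (2 * M + 1))) => N N0.
set L := (Num.truncn (M * N%:R)).+1.
have Np : 0 < N%:R :> R by rewrite ltr0n.
have hL : forall y, `|y| <= M -> `|y * N%:R| < L%:R.
  move=> y yM; apply: le_lt_trans (truncnS_gt _).
  by rewrite normrM (ger0_norm (ltW Np)) ler_pM2r.
set U := g \o Xa; set W := k \o Xb.
set U' := qf U N L; set W' := qf W N L.
have eU x : `|U x - U' x| <= N%:R^-1 by apply: qf_err => //; apply: hL; exact: gM.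
have eW x : `|W x - W' x| <= N%:R^-1 by apply: qf_err => //; apply: hL; exact: kM.
have e1 : N%:R^-1 <= 1 :> R by rewrite invf_le1 // ler1n.
have bU' x : `|U' x| <= M + 1.
  have := eU x; have := gM (Xa x); rewrite -/(U x).
  move=> h1 h2; have -> : U' x = U x - (U x - U' x) by ring.
  apply: le_trans (ler_normB _ _) _; apply: lerD => //.
  exact: le_trans h2 e1.
have bU : bmf U by apply: bmf_comp gM.
have bW : bmf W by apply: bmf_comp kM.
have bU'' : bmf U' by apply: bmf_qf.
have bW'' : bmf W' by apply: bmf_qf.
have h1 : `|Ef P (fun x => U x * W x) - Ef P (fun x => U' x * W' x)|
    <= N%:R^-1 * M + (M + 1) * N%:R^-1.
  rewrite -EfB; [|exact: bmfM|exact: bmfM].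
  apply: Ef_abs_le; first by apply: bmfB; exact: bmfM.
  move=> x; apply: prod_diff => //; exact: kM.
have h2 : `|Ef P U * Ef P W - Ef P U' * Ef P W'|
    <= N%:R^-1 * M + (M + 1) * N%:R^-1.
  apply: prod_diff.
  - by rewrite -EfB //; apply: Ef_abs_le => //; exact: bmfB.
  - by rewrite -EfB //; apply: Ef_abs_le => //; exact: bmfB.
  - by apply: Ef_abs_le => // x; exact: kM.
  - exact: Ef_abs_le.
have E' : Ef P (fun x => U' x * W' x) = Ef P U' * Ef P W' by apply: indep_step.
have -> : Ef P (fun x => g (Xa x) * k (Xb x)) - Ef P (g \o Xa) * Ef P (k \o Xb) =
  (Ef P (fun x => U x * W x) - Ef P (fun x => U' x * W' x)) -
  (Ef P U * Ef P W - Ef P U' * Ef P W') by rewrite E' /U /W /=; ring.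
apply: le_trans (ler_normB _ _) _.
have -> : 2 * (2 * M + 1) / N%:R = 2 * (N%:R^-1 * M + (M + 1) * N%:R^-1) by field; rewrite gt_eqF.
by rewrite mulr2n mulrDl !mul1r lerD.
Qed.
End Indep.
Section More.
Context d (T : measurableType d) (R : realType) (P : probability T R).

Lemma Ef_ae (f g : T -> R) (N : set T) : measurable N -> P N = 0%E ->
  measurable_fun setT f -> bmf g -> (forall x, ~ N x -> f x = g x) ->
  ('E_P[f] = (Ef P g)%:E)%E.
Proof.
move=> mN PN mf bg fg; rewrite -bmfE // !unlock.
apply: ae_eq_integral => //.
- exact/measurable_EFinP.
- by apply/measurable_EFinP; case: bg.
- exists N; split => // x /= h; apply: contrapT => Nx; apply: h => _.
  by rewrite fg.
Qed.

Lemma mlt (F : T -> R) a : measurable_fun setT F -> measurable [set x | a < F x].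
Proof.
move=> mF; have := mF measurableT _ (measurable_itv `]a, +oo[).
rewrite setTI; congr measurable; apply/seteqP; split => y /=; rewrite in_itv /= andbT //.
Qed.

Lemma markov_Ef (F : T -> R) a : bmf F -> 0 < a -> (forall x, 0 <= F x) ->
  (P [set x | (a < F x)%R] <= (Ef P F / a)%:E)%E.
Proof.
move=> bF a0 F0; set A := [set x | a < F x].
have mA : measurable A by apply: mlt; case: bF.
have fA : P A \is a fin_num by apply: fin_num_measure.
rewrite -(fineK fA) lee_fin ler_pdivlMr // mulrC.
rewrite -Ef_indic // -EfZ; last exact: bmf_indic.
apply: Ef_le => //; first by apply: bmfZ; exact: bmf_indic.
move=> x; rewrite indicE; case: (boolP (x \in A)) => xA.
  by rewrite mulr1; move: xA; rewrite inE => /ltW.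
by rewrite mulr0.
Qed.

Lemma sum_sq_bound n (G : 'I_n -> T -> R) (A : 'I_n -> 'I_n -> R) b :
  (forall i, bmf (G i)) ->
  (forall i j, Ef P (fun x => G i x * G j x) <= b * ((i == j)%:R + A i j)) ->
  Ef P (fun x => (\sum_i G i x) ^+ 2) <= b * (n%:R + \sum_i \sum_j A i j).
Proof.
move=> bG hG.
have -> : (fun x => (\sum_i G i x) ^+ 2) =
    (fun x => \sum_i \sum_j G i x * G j x).
  apply/funext => x; rewrite expr2 big_distrl; apply: eq_bigr => i _.
  by rewrite big_distrr.
rewrite Ef_sum; last by move=> i; apply: bmf_sum => j; exact: bmfM.
have -> : n%:R + \sum_i \sum_j A i j = \sum_i \sum_j ((i == j)%:R + A i j).
  rewrite -[n in n%:R]card_ord -sum1_card natr_sum -big_split /=.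
  apply: eq_bigr => i _; rewrite big_split /=; congr (_ + _).
  by rewrite (bigD1 i) //= eqxx big1 ?addr0 // => j /negPf; rewrite eq_sym => ->.
rewrite mulr_sumr; apply: ler_sum => i _.
rewrite Ef_sum; last by move=> j; exact: bmfM.
rewrite mulr_sumr; apply: ler_sum => j _; exact: hG.
Qed.

End More.
Lemma mf_sum d (T : measurableType d) (R : realType) (I : Type) (s : seq I) (F : I -> T -> R) :
  (forall i, measurable_fun setT (F i)) -> measurable_fun setT (fun x => \sum_(i <- s) F i x).
Proof.
move=> mF; elim: s => [|i s IH].
  by under eq_fun do rewrite big_nil; exact: measurable_cst.
by under eq_fun do rewrite big_cons; exact: measurable_funD.
Qed.

Lemma null_bigU d (T : measurableType d) (R : realType) (P : probability T R)
  (I : Type) (s : seq I) (F : I -> set T) :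
  (forall i, measurable (F i)) -> (forall i, P (F i) = 0%E) ->
  P (\big[setU/set0]_(i <- s) F i) = 0%E.
Proof.
move=> mF PF; elim: s => [|i s IH]; first by rewrite big_nil measure0.
rewrite big_cons measureU0 //; [exact: PF | by apply: bigsetU_measurable => j _; exact: mF].
Qed.

Lemma mem_bigsetU (T I : eqType) (s : seq I) (F : I -> set T) i x :
  i \in s -> F i x -> (\big[setU/set0]_(j <- s) F j) x.
Proof.
elim: s => [//|j s IH]; rewrite inE big_cons => /orP[/eqP <- h|h Fx].
  by left.
by right; exact: IH.
Qed.

Section Fixed.
Context d (T : measurableType d) (R : realType) (P : probability T R).
Variables (Xf : nat -> T -> R) (Vn : set nat) (En : rel nat) (n : nat) (lab : 'I_n -> nat)
  (c1 c2 eps : R).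
Hypothesis mX : forall k, measurable_fun setT (Xf k).
Hypothesis Hdep : dependency_graph P Xf Vn En.
Hypothesis Hinj : injective lab.
Hypothesis HlabV : forall i, Vn (lab i).
Hypothesis c1p : 0 < c1.
Hypothesis c2p : 0 < c2.
Hypothesis epsp : 0 < eps.
Hypothesis Hbd : forall i, P [set w | c1 < `| Xf (lab i) w - mean_mu P n Xf lab | ] = 0%E.
Hypothesis Hdeg : forall i, \sum_(j < n) adjmx R En lab i j <= c2.
Hypothesis Hhomo : forall i j, Vn i -> Vn j -> 'V_P[Xf i] = 'V_P[Xf j].
Hypothesis n0 : (0 < n)%N.

Let mu := mean_mu P n Xf lab.
Let zc (y : R) : R := Num.max (- c1) (Num.min c1 (y - mu)).

Let mzc : measurable_fun setT zc.
Proof.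
apply: measurable_maxr => //; apply: measurable_minr => //.
exact: measurable_funB.
Qed.

Let zcB y : `|zc y| <= c1.
Proof.
rewrite /zc ler_norml; apply/andP; split.
  by rewrite le_max lexx.
rewrite ge_max ge_min lexx /= andbT; apply: (@le_trans _ _ 0); [rewrite oppr_le0|]; exact: ltW.
Qed.

Let zcE y : `|y - mu| <= c1 -> zc y = y - mu.
Proof.
rewrite ler_norml => /andP[h1 h2].
by rewrite /zc (min_idPr h2) (max_idPr h1).
Qed.

Let Z (i : 'I_n) : T -> R := zc \o Xf (lab i).

Let bZ i : bmf (Z i).
Proof. exact: bmf_comp (mX _) mzc zcB. Qed.

Let Nb := \big[setU/set0]_(i < n) [set w | c1 < `|Xf (lab i) w - mu|].

Let mNb : measurable Nb.
Proof.
apply: bigsetU_measurable => i _; apply: mlt.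
apply: measurableT_comp => //; exact: measurable_funB.
Qed.

Let PNb : P Nb = 0%E.
Proof.
rewrite /Nb -big_enum /=; apply: null_bigU => i.
  apply: mlt; apply: measurableT_comp => //; exact: measurable_funB.
exact: Hbd.
Qed.

Let ZE w i : ~ Nb w -> Z i w = Xf (lab i) w - mu.
Proof.
move=> Nw; rewrite /Z /= zcE //; rewrite leNgt; apply/negP => h; apply: Nw.
exact: (mem_bigsetU (mem_index_enum i)).
Qed.


Let m i := Ef P (Z i).

Let EX i : ('E_P[Xf (lab i)] = (m i + mu)%:E)%E.
Proof.
rewrite (Ef_ae (g := fun w => Z i w + cst mu w) mNb PNb (mX _)).
- by rewrite EfD ?Ef_cst //; exact: bmf_cst.
- by apply: bmfD => //; exact: bmf_cst.
- by move=> w Nw; rewrite ZE //= subrK.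
Qed.

Let summ0 : \sum_i m i = 0.
Proof.
have : mu = n%:R^-1 * \sum_(i < n) (m i + mu).
  by rewrite {1}/mu /mean_mu; congr (_ * _); apply: eq_bigr => i _; rewrite EX.
have hn : n%:R != 0 :> R by rewrite pnatr_eq0 -lt0n.
rewrite big_split /= sumr_const card_ord => h.
have h2 : n%:R * mu = \sum_i m i + mu *+ n by rewrite {1}h mulrA mulfV // mul1r.
by move: h2; rewrite mulr_natl => /eqP; rewrite eq_sym -subr_eq0 addrK => /eqP.
Qed.

Let VX i : 'V_P[Xf (lab i)] = (Ef P (fun w => (Z i w - m i) ^+ 2))%:E.
Proof.
rewrite /variance unlock EX /=.
rewrite (Ef_ae (g := fun w => (Z i w - m i) ^+ 2) mNb PNb) //.
- apply: measurable_funM; apply: measurable_funB => //.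
- by apply: bmfM; apply: bmfB => //; exact: bmf_cst.
- move=> w Nw /=.
  change ((Xf (lab i) w - (m i + mu)) * (Xf (lab i) w - (m i + mu)) = (Z i w - m i) ^+ 2).
  by rewrite ZE // expr2; ring.
Qed.


Let Zb w := n%:R^-1 * \sum_i Z i w.
Let bZb : bmf Zb.
Proof. by apply: bmfZ; apply: bmf_sum. Qed.
Let hn : n%:R != 0 :> R.
Proof. by rewrite pnatr_eq0 -lt0n. Qed.

Let EfZb : Ef P Zb = 0.
Proof. rewrite EfZ; last exact: bmf_sum. by rewrite Ef_sum // (_ : \sum_i Ef P (Z i) = 0) ?mulr0 //; exact: summ0. Qed.

Let XbarE w : ~ Nb w -> Xbar n Xf lab w = Zb w + mu.
Proof.
move=> Nw; rewrite /Xbar /Zb.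
under eq_bigr => i _ do rewrite -[Xf (lab i) w](subrK mu) -ZE //.
rewrite big_split /= sumr_const card_ord mulrDr; congr (_ + _).
have -> : mu *+ n = n%:R * mu by rewrite mulr_natl.
by rewrite mulrA mulVf // mul1r.
Qed.

Let mXbar : measurable_fun setT (Xbar n Xf lab).
Proof.
rewrite /Xbar; apply: measurable_funM => //; exact: mf_sum.
Qed.

Let EXbar : ('E_P[Xbar n Xf lab] = mu%:E)%E.
Proof.
rewrite (Ef_ae (g := fun w => Zb w + cst mu w) mNb PNb mXbar).
- by rewrite EfD ?Ef_cst ?EfZb ?add0r //; exact: bmf_cst.
- by apply: bmfD => //; exact: bmf_cst.
- by move=> w Nw; rewrite XbarE.
Qed.

Let VXbar : 'V_P[Xbar n Xf lab] = (Ef P (fun w => Zb w ^+ 2))%:E.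
Proof.
rewrite /variance unlock EXbar /=.
rewrite (Ef_ae (g := fun w => Zb w ^+ 2) mNb PNb) //.
- by apply: measurable_funM; apply: measurable_funB.
- exact: bmfM.
- move=> w Nw /=.
  change ((Xbar n Xf lab w - mu) * (Xbar n Xf lab w - mu) = Zb w ^+ 2).
  by rewrite XbarE // expr2 addrK.
Qed.

Let i0 : 'I_n := Ordinal n0.
Let s2 := Ef P (fun w => (Z i0 w - m i0) ^+ 2).
Let Vs2 i : Ef P (fun w => (Z i w - m i) ^+ 2) = s2.
Proof. by have := Hhomo (HlabV i) (HlabV i0); rewrite !VX => -[]. Qed.


Let A := adjmx R En lab.
Let AE i j : A i j = (En (lab i) (lab j))%:R.
Proof. by rewrite /A /adjmx mxE. Qed.

Let indep_ij i j (g k : R -> R) B : i != j -> ~~ En (lab i) (lab j) ->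
  measurable_fun setT g -> measurable_fun setT k ->
  (forall y, `|g y| <= B) -> (forall y, `|k y| <= B) ->
  Ef P (fun x => g (Xf (lab i) x) * k (Xf (lab j) x)) =
  Ef P (g \o Xf (lab i)) * Ef P (k \o Xf (lab j)).
Proof.
move=> ij nE mg mk gB kB; apply: (indep_Ef (mX _) (mX _)) mg mk gB kB.
move=> C D mC mD.
have hI := Hdep (V1 := [set lab i]) (V2 := [set lab j]).
apply: hI.
- by move=> _ ->; exact: HlabV.
- by move=> _ ->; exact: HlabV.
- apply/seteqP; split => // x [/= -> h]; move: ij; rewrite (Hinj h) eqxx.
  by [].
- by move=> a b /= -> ->.
- by apply: sub_sigma_algebra; exists (lab i), C; split.
- by apply: sub_sigma_algebra; exists (lab j), D; split.
Qed.


Let SA := \sum_i \sum_j A i j.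

Let pairB (g : 'I_n -> R -> R) B b : (forall i, measurable_fun setT (g i)) ->
  (forall i y, `|g i y| <= B) -> (forall i, Ef P (g i \o Xf (lab i)) = 0) ->
  (forall i j, Ef P (fun x => g i (Xf (lab i) x) * g j (Xf (lab j) x)) <= b) -> 0 <= b ->
  Ef P (fun x => (\sum_i g i (Xf (lab i) x)) ^+ 2) <= b * (n%:R + SA).
Proof.
move=> mg gB g0 hb b0.
apply: (sum_sq_bound (G := fun i => g i \o Xf (lab i))).
  by move=> i; apply: bmf_comp (mX _) (mg i) (gB i).
move=> i j; case: (eqVneq i j) => [<-|ij].
  apply: le_trans (hb i i) _.
  by rewrite /= mulrDr mulr1 lerDl; apply: mulr_ge0 => //; rewrite AE ler0n.
rewrite /= add0r AE; case E: (En (lab i) (lab j)).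
  by rewrite mulr1; exact: hb.
rewrite mulr0 /= (indep_ij ij _ (mg i) (mg j) (gB i) (gB j)) ?E //.
by rewrite g0 mul0r.
Qed.

Let mB i : `|m i| <= c1.
Proof. by apply: Ef_abs_le => // x; exact: zcB. Qed.

Let bG1 i : bmf (fun x => Z i x - m i).
Proof. apply: bmfB; [exact: bZ | exact: bmf_cst]. Qed.

Let bG1s i : bmf (fun x => (Z i x - m i) ^+ 2).
Proof. exact: bmfM (bG1 i) (bG1 i). Qed.

Let step1 : Ef P (fun w => Zb w ^+ 2) <= n%:R^-2 * (s2 * (n%:R + SA)).
Proof.
set g := fun (i : 'I_n) (y : R) => zc y - m i.
have -> : (fun w => Zb w ^+ 2) =
    (fun w => n%:R^-2 * (\sum_i g i (Xf (lab i) w)) ^+ 2).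
  apply/funext => w; rewrite /Zb /g big_split /= sumrN.
  rewrite (_ : \sum_i m i = 0) ?subr0; last exact: summ0.
  by rewrite exprMn exprVn.
rewrite EfZ; last by apply: bmfM; apply: bmf_sum => i; exact: bG1.
rewrite ler_pM2l ?invr_gt0 ?exprn_gt0 ?ltr0n //.
apply: (pairB (B := c1 + c1)).
- by move=> i; apply: measurable_funB.
- by move=> i y; apply: le_trans (ler_normB _ _) _; apply: lerD; [exact: zcB | exact: mB].
- move=> i.
  have -> : g i \o Xf (lab i) = fun x => Z i x - cst (m i) x by [].
  by rewrite EfB ?Ef_cst ?subrr //; exact: bmf_cst.
- move=> i j; rewrite /g.
  apply: (@le_trans _ _ (Ef P (fun x => 2^-1 * ((Z i x - m i) ^+ 2 + (Z j x - m j) ^+ 2)))).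
    apply: Ef_le.
    + exact: bmfM (bG1 i) (bG1 j).
    + by apply: bmfZ; apply: bmfD.
    + move=> x; rewrite /Z /=.
      set a := zc (Xf (lab i) x) - m i; set b := zc (Xf (lab j) x) - m j.
      have : 0 <= (a - b) ^+ 2 by apply: sqr_ge0.
      rewrite !expr2; nra.
  rewrite EfZ; last by apply: bmfD.
  rewrite EfD //.
  by rewrite !Vs2; lra.
- by rewrite -(Vs2 i0); apply: Ef_ge0 => // x; exact: sqr_ge0.
Qed.


Let q i := Ef P (fun w => Z i w ^+ 2).
Let bZs i : bmf (fun w => Z i w ^+ 2).
Proof. exact: bmfM (bZ i) (bZ i). Qed.

Let qE i : q i = s2 + m i ^+ 2.
Proof.
rewrite -(Vs2 i).
have -> : (fun w => (Z i w - m i) ^+ 2) =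
   (fun w => Z i w ^+ 2 + ((- (2 * m i)) * Z i w + cst (m i ^+ 2) w)).
  by apply/funext => w /=; ring.
rewrite EfD //; last by apply: bmfD; [exact: bmfZ | exact: bmf_cst].
rewrite EfD //; last exact: bmf_cst.
rewrite EfZ // Ef_cst -/(m i) -/(q i); first ring. exact: bmfZ.
Qed.

Let sqB y : 0 <= zc y ^+ 2 <= c1 ^+ 2.
Proof.
have := zcB y; rewrite ler_norml => /andP[h1 h2].
apply/andP; split; first exact: sqr_ge0.
rewrite !expr2; nra.
Qed.

Let qB i : 0 <= q i <= c1 ^+ 2.
Proof.
apply/andP; split.
  by apply: Ef_ge0 => // x; exact: sqr_ge0.
rewrite -[X in _ <= X](Ef_cst P); apply: Ef_le => //; first exact: bmf_cst.
by move=> x; have /andP[] := sqB (Xf (lab i) x).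
Qed.

Let Qf w := n%:R^-1 * \sum_i Z i w ^+ 2.
Let EQ := n%:R^-1 * \sum_i q i.

Let bQf : bmf Qf.
Proof. by apply: bmfZ; apply: bmf_sum. Qed.

Let step5 : Ef P (fun w => (Qf w - EQ) ^+ 2) <= n%:R^-2 * ((c1 ^+ 2 * c1 ^+ 2) * (n%:R + SA)).
Proof.
set g := fun (i : 'I_n) (y : R) => zc y ^+ 2 - q i.
have bG i : bmf (fun x => Z i x ^+ 2 - q i).
  by apply: bmfB; [exact: bZs | exact: bmf_cst].
have -> : (fun w => (Qf w - EQ) ^+ 2) =
    (fun w => n%:R^-2 * (\sum_i g i (Xf (lab i) w)) ^+ 2).
  apply/funext => w; rewrite /Qf /EQ /g -mulrBr sumrB.
  by rewrite exprMn exprVn.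
rewrite EfZ; last by apply: bmfM; apply: bmf_sum => i; exact: bG.
rewrite ler_pM2l ?invr_gt0 ?exprn_gt0 ?ltr0n //.
apply: (pairB (B := c1 ^+ 2)).
- by move=> i; apply: measurable_funB => //; apply: measurable_funM.
- move=> i y; rewrite /g; have := sqB y; have := qB i.
  move=> /andP[h1 h2] /andP[h3 h4]; rewrite ler_norml; apply/andP; split; lra.
- move=> i.
  have -> : g i \o Xf (lab i) = fun x => Z i x ^+ 2 - cst (q i) x by [].
  rewrite EfB ?Ef_cst ?subrr //; try exact: bZs; exact: bmf_cst.
- move=> i j.
  rewrite -[X in _ <= X](Ef_cst P); apply: Ef_le; first exact: bmfM (bG i) (bG j).
    exact: bmf_cst.
  move=> x; rewrite /g /=; apply: le_trans (ler_norm _) _; rewrite normrM.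
  have hb k y : `|zc y ^+ 2 - q k| <= c1 ^+ 2.
    have := sqB y; have := qB k.
    move=> /andP[h1 h2] /andP[h3 h4]; rewrite ler_norml; apply/andP; split; lra.
  by apply: ler_pM => //; apply: hb.
- by apply: mulr_ge0; apply: sqr_ge0.
Qed.


Let D := 1 + n%:R^-1 * SA.

Let SA_ge0 : 0 <= SA.
Proof. by apply: sumr_ge0 => i _; apply: sumr_ge0 => j _; rewrite AE ler0n. Qed.

Let SA_le : SA <= n%:R * c2.
Proof.
apply: (@le_trans _ _ (\sum_(i < n) c2)); first by apply: ler_sum => i _; exact: Hdeg.
by rewrite sumr_const card_ord mulr_natl.
Qed.

Let D_ge1 : 1 <= D.
Proof. by rewrite /D lerDl; apply: mulr_ge0 => //; rewrite invr_ge0 ler0n. Qed.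

Let D_le : D <= 1 + c2.
Proof.
rewrite /D lerD2l ler_pdivrMl ?ltr0n //.
Qed.

Let sig_E w : ~ Nb w -> sigma2_hat n Xf lab w = Qf w - Zb w ^+ 2.
Proof.
move=> Nw; rewrite /sigma2_hat /Qf.
have e0 : \sum_i (Xf (lab i) w - Xbar n Xf lab w) ^+ 2 = \sum_i (Z i w - Zb w) ^+ 2.
  by apply: eq_bigr => i _; rewrite XbarE // ZE //; congr (_ ^+ 2); ring.
have e1 : \sum_i (Z i w - Zb w) ^+ 2 =
    \sum_i (Z i w ^+ 2 + ((- (2 * Zb w)) * Z i w + Zb w ^+ 2)).
  by apply: eq_bigr => i _; ring.
have hs : \sum_i Z i w = n%:R * Zb w by rewrite /Zb mulrA mulfV // mul1r.
rewrite e0 e1 !big_split /= -mulr_sumr hs sumr_const card_ord.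
rewrite -(mulr_natr (Zb w ^+ 2)).
by field.
Qed.

Let mS : measurable_fun setT (sigma2_hat n Xf lab).
Proof.
rewrite /sigma2_hat; apply: measurable_funM => //; apply: mf_sum => i.
by apply: measurable_funX; apply: measurable_funB.
Qed.


Let VZ := Ef P (fun w => Zb w ^+ 2).
Let dl := eps / (1 + c2).
Let dlp : 0 < dl.
Proof. by apply: divr_gt0 => //; apply: addr_gt0. Qed.

Let nVZ : n%:R * VZ <= s2 * D.
Proof.
have np : 0 < n%:R :> R by rewrite ltr0n.
have e : n%:R * (n%:R^-2 * (s2 * (n%:R + SA))) = s2 * D by rewrite /D; field.
by apply: le_trans (ler_wpM2l (ltW np) step1) _; rewrite e.
Qed.

Let s2_le : s2 <= 4 * c1 ^+ 2.
Proof.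
rewrite -[X in _ <= X](Ef_cst P); apply: Ef_le => //; first exact: bmf_cst.
move=> x /=; have := zcB (Xf (lab i0) x); have := mB i0.
rewrite !ler_norml => /andP[h1 h2] /andP[h3 h4].
rewrite /Z /= !expr2; nra.
Qed.

Let s2_ge0 : 0 <= s2.
Proof. by apply: Ef_ge0 => // x; exact: sqr_ge0. Qed.

Let EQ_ge : s2 <= EQ.
Proof.
have np : 0 < n%:R :> R by rewrite ltr0n.
rewrite /EQ ler_pdivlMl //.
have -> : n%:R * s2 = \sum_(i < n) s2 by rewrite sumr_const card_ord mulr_natl.
apply: ler_sum => i _; rewrite qE lerDl; exact: sqr_ge0.
Qed.

Let VZ_le : VZ <= 4 * c1 ^+ 2 * (1 + c2) / n%:R.
Proof.
have np : 0 < n%:R :> R by rewrite ltr0n.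
apply: le_trans step1 _.
have e : 4 * c1 ^+ 2 * (1 + c2) / n%:R = n%:R^-2 * (4 * c1 ^+ 2 * (n%:R + n%:R * c2)).
  by field.
rewrite e ler_wpM2l ?invr_ge0 ?exprn_ge0 ?ler0n //.
apply: ler_pM => //; first by apply: addr_ge0 => //; rewrite ler0n.
by rewrite lerD2l.
Qed.


Let EV2 := Ef P (fun w => (Qf w - EQ) ^+ 2).
Let EV2_le : EV2 <= c1 ^+ 2 * c1 ^+ 2 * (1 + c2) / n%:R.
Proof.
have np : 0 < n%:R :> R by rewrite ltr0n.
apply: le_trans step5 _.
have e : c1 ^+ 2 * c1 ^+ 2 * (1 + c2) / n%:R =
    n%:R^-2 * (c1 ^+ 2 * c1 ^+ 2 * (n%:R + n%:R * c2)) by field.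
rewrite e ler_wpM2l ?invr_ge0 ?exprn_ge0 ?ler0n //.
apply: ler_pM => //; first by apply: mulr_ge0; apply: sqr_ge0.
  by apply: addr_ge0 => //; rewrite ler0n.
by rewrite lerD2l.
Qed.

Let V2E w : ~ Nb w -> n%:R * V2_hat n Xf lab A w = (Qf w - Zb w ^+ 2) * D.
Proof. by move=> Nw; rewrite /V2_hat sig_E // -/SA -/D; field. Qed.

Let mV2 : measurable_fun setT (fun w => n%:R * V2_hat n Xf lab A w).
Proof.
apply: measurable_funM => //; rewrite /V2_hat.
by apply: measurable_funM => //; apply: measurable_funM.
Qed.

Lemma fixed_bound :
  (P [set w | (n%:R%:E * 'V_P[Xbar n Xf lab]
      - (n%:R * V2_hat n Xf lab (adjmx R En lab) w)%:E > eps%:E)%E] <=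
  ((((4 * c1 ^+ 2 * (1 + c2)) / (eps / (1 + c2) / 2) +
     (c1 ^+ 2 * c1 ^+ 2 * (1 + c2)) / ((eps / (1 + c2)) ^+ 2 / 4))) / n%:R)%:E)%E.
Proof.
rewrite VXbar -/A -/VZ.
set S := [set w | _].
have SE : S = [set w | eps < n%:R * VZ - n%:R * V2_hat n Xf lab A w].
  by apply/seteqP; split => w; rewrite /S /= -EFinM -EFinB lte_fin.
set E1 := [set w | dl / 2 < Zb w ^+ 2].
set E2 := [set w | dl ^+ 2 / 4 < (Qf w - EQ) ^+ 2].
have mS' : measurable S.
  by rewrite SE; apply: mlt; apply: measurable_funB.
have mE1 : measurable E1 by apply: mlt; apply: measurable_funX; case: bZb.
have mE2 : measurable E2.
  by apply: mlt; apply: measurable_funX; apply: measurable_funB => //; case: bQf.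
have sub : S `<=` (E1 `|` E2) `|` Nb.
  move=> w; rewrite SE /= => h; apply: contrapT => hn'.
  have nb : ~ Nb w by move=> x; apply: hn'; right.
  have n1 : ~ E1 w by move=> x; apply: hn'; left; left.
  have n2 : ~ E2 w by move=> x; apply: hn'; left; right.
  have t1 : Zb w ^+ 2 <= dl / 2 by rewrite leNgt; apply/negP.
  have t2' : (Qf w - EQ) ^+ 2 <= dl ^+ 2 / 4 by rewrite leNgt; apply/negP.
  have t2 : EQ - Qf w <= dl / 2.
    rewrite leNgt; apply/negP => hc.
    have : (dl / 2) ^+ 2 < (Qf w - EQ) ^+ 2.
      have h0 : 0 < dl / 2 by rewrite divr_gt0.
      rewrite !expr2; nra.
    have -> : (dl / 2) ^+ 2 = dl ^+ 2 / 4 by field.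
    by rewrite ltNge t2'.
  move: h; rewrite V2E //.
  have D0 : 0 <= D by apply: le_trans ler01 D_ge1.
  have p1 : s2 * D <= EQ * D by rewrite ler_wpM2r.
  have p2 : (EQ - Qf w + Zb w ^+ 2) * D <= dl * D by rewrite ler_wpM2r //; lra.
  have p3 : dl * D <= dl * (1 + c2) by rewrite ler_wpM2l // ltW.
  have e3 : dl * (1 + c2) = eps.
    rewrite /dl; field; rewrite gt_eqF //; apply: addr_gt0 => //.
  have := nVZ; lra.
apply: (@le_trans _ _ (P ((E1 `|` E2) `|` Nb))).
  apply: le_measure => //; rewrite inE //.
  by apply: measurableU => //; exact: measurableU.
rewrite measureU0 //; last exact: measurableU.
apply: le_trans (measureU2 _ mE1 mE2) _.
have h0 : 0 < dl / 2 by rewrite divr_gt0.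
have h0' : 0 < dl ^+ 2 / 4 by rewrite divr_gt0 // exprn_gt0.
have h1 := markov_Ef P (bmfM bZb bZb) h0 (fun w => sqr_ge0 (Zb w)).
have bQE : bmf (fun w => Qf w - EQ) by apply: bmfB => //; exact: bmf_cst.
have h2 := markov_Ef P (bmfM bQE bQE) h0' (fun w => sqr_ge0 (Qf w - EQ)).
apply: le_trans (leeD h1 h2) _.
rewrite -EFinD lee_fin -/dl mulrDl.
have key (a b c : R) : 0 < c -> a <= b / n%:R -> a / c <= b / c / n%:R.
  by move=> c0 h; rewrite mulrAC ler_wpM2r // invr_ge0 ltW.
apply: lerD.
  by apply: key => //; exact: VZ_le.
apply: key => //.
Qed.

End Fixed.

Unset Implicit Arguments.

Theorem proposition2 (d : measure_display) (T : measurableType d) (R : realType)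
  (P : probability T R) (X : nat -> {RV P >-> R})
  (V : nat -> set nat) (E : nat -> rel nat) (lab : forall n, 'I_n -> nat)
  (c1 c2 c3 : R) :
  (* the n-th graph G_n = (V n, E n) is a finite simple graph, and the graphs are nested *)
  (forall n, finite_set (V n)) ->
  (forall n, simple_graph (V n) (E n)) ->
  (forall n, V n `<=` V n.+1) ->
  (forall n i j, E n i j -> E n.+1 i j) ->
  (* G_n is a dependency graph for the X i *)
  (forall n, dependency_graph P (fun i => X i : T -> R) (V n) (E n)) ->
  (* n distinct observed vertices V_S in V n *)
  (forall n, injective (lab n)) ->
  (forall n (i : 'I_n), V n (lab n i)) ->
  (* asymptotic scaling assumption *)
  0 < c1 -> 0 < c2 -> 0 < c3 ->
  (forall n (i : 'I_n),
     P [set w | c1 < `| X (lab n i) w - mean_mu P n (fun k => X k : T -> R) (lab n) | ] = 0%E) ->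
  (forall n (i : 'I_n),
     \sum_(j < n) adjmx R (E n) (lab n) i j <= c2) ->
  ((fun n => (n%:R%:E * 'V_P[Xbar n (fun k => X k : T -> R) (lab n)])%E) @ \oo
     --> c3%:E) ->
  (* homoskedasticity *)
  (forall n i j, V n i -> V n j -> 'V_P[X i] = 'V_P[X j]) ->
  forall eps : R, 0 < eps ->
  (fun n => P [set w |
     (n%:R%:E * 'V_P[Xbar n (fun k => X k : T -> R) (lab n)]
      - (n%:R * V2_hat n (fun k => X k : T -> R) (lab n) (adjmx R (E n) (lab n)) w)%:E
      > eps%:E)%E]) @ \oo --> 0%E.
Proof.
move=> _ _ _ _ hdep hinj hlabV c1p c2p _ hbd hdeg _ hhomo eps epsp.
set K := (4 * c1 ^+ 2 * (1 + c2) / (eps / (1 + c2) / 2) +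
   c1 ^+ 2 * c1 ^+ 2 * (1 + c2) / ((eps / (1 + c2)) ^+ 2 / 4)).
have mX : forall k, measurable_fun setT ((fun k => X k : T -> R) k).
  by move=> k; exact: measurable_funP.
apply: (@squeeze_cvge _ _ _ _ (fun _ => 0%E) _ (fun n => (`|K| * 2 * harmonic n)%:E)).
- exists 1%N => // k /= hk.
  rewrite measure_ge0 /=.
  apply: le_trans (fixed_bound mX (hdep k) (hinj k) (hlabV k) c1p c2p epsp (hbd k) (hdeg k) (hhomo k) hk) _.
  rewrite lee_fin /harmonic /= -/K.
  have kp : 0 < k%:R :> R by rewrite ltr0n.
  apply: (@le_trans _ _ (`|K| / k%:R)).
    by rewrite ler_wpM2r ?invr_ge0 ?ler0n ?ler_norm.
  rewrite -mulrA ler_wpM2l // -subr_ge0.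
  have -> : 2 / k.+1%:R - k%:R^-1 = (k%:R - 1) / (k%:R * (k%:R + 1)) :> R.
    by rewrite -natr1; field; rewrite !gt_eqF // addr_gt0.
  apply: divr_ge0; first by rewrite subr_ge0 ler1n.
  by apply: mulr_ge0; [exact: ltW | apply: addr_ge0].
- exact: cvg_cst.
- apply: cvg_EFin; first by apply: nearW.
  rewrite (_ : 0 = `|K| * 2 * 0); last by rewrite mulr0.
  apply: cvgM; [exact: cvg_cst | exact: cvg_harmonic].
Qed.
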